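(* Let \(G\) be a connected split graph and \(T\) a spanning tree of \(G\). Then \(T\) is the \(\mathcal{F}\)-tree of some BFS ordering of \(G\) if and only if \(T\) is the \(\mathcal{F}\)-tree of some MNS ordering of \(G\). The same equivalence holds with MNS replaced by MCS, by LBFS, and by LDFS, respectively.
   Context: A split graph is a graph whose vertex set can be partitioned into a clique and an independent set. A BFS ordering is a vertex ordering produced by breadth first search (vertices are visited from a start vertex using a queue of discovered but unvisited vertices). With \(n=|V|\): an LBFS ordering is produced by starting with label \((n)\) on a start vertex \(s\), empty labels elsewhere, and for \(i=1,\dots,n\) picking an unnumbered vertex of lexicographically largest label as \(v_i\) and appending \(n-i\) to the labels of its unnumbered neighbors. An LDFS ordering is produced similarly with \(s\) labelled \((0)\), others empty, and prepending \(i\) instead of appending \(n-i\). An MCS ordering is produced by repeatedly choosing an unnumbered vertex with the most numbered neighbors. An MNS ordering is produced with set labels: all labels \(\emptyset\), \(s\) gets \(\{n+1\}\); repeatedly pick an unnumbered vertex whose label is inclusion-maximal, make it \(v_i\), and add \(i\) to the labels of its unnumbered neighbors. Ties are broken arbitrarily in all searches. The \(\mathcal{F}\)-tree of an ordering \(\sigma=(v_1,\dots,v_n)\) is the tree on \(V\) with, for each \(v\neq v_1\), an edge from \(v\) to its leftmost neighbor in \(\sigma\). *)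

(* Defs.v *)
From mathcomp Require Import all_boot.
Set Implicit Arguments. Unset Strict Implicit. Unset Printing Implicit Defensive.

Section Graphs.
Variable T : finType.

Definition simple_graph (e : rel T) : Prop := symmetric e /\ irreflexive e.

Definition connected_graph (e : rel T) : Prop :=
  0 < #|T| /\ forall x y, connect e x y.

Definition split_graph (e : rel T) : Prop :=
  exists K I : {set T},
    [/\ K :&: I = set0, K :|: I = setT,
        {in K &, forall x y, x != y -> e x y} &
        {in I &, forall x y, ~~ e x y}].

Definition acyclic (t : rel T) : Prop :=
  forall c : seq T, uniq c -> 2 < size c -> ~~ cycle t c.

Definition spanning_tree (e t : rel T) : Prop :=
  [/\ symmetric t, subrel t e, (forall x y, connect t x y) & acyclic t].

Definition is_ordering (s : seq T) : Prop := uniq s /\ forall x, x \in s.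

Fixpoint lexle (a b : seq nat) : bool :=
  match a, b with
  | [::], _ => true
  | _ :: _, [::] => false
  | x :: a', y :: b' => (x < y) || ((x == y) && lexle a' b')
  end.

Variable e : rel T.

(* indices k (0-based) of the already numbered vertices p that are adjacent
   to w; vertex nth p k is v_(k+1) *)
Definition nbr_steps (p : seq T) (w : T) : seq nat :=
  [seq k <- iota 0 (size p) | e (nth w p k) w].

(* bfs_run vis q out : with visited vertices vis (in order) and queue q of
   discovered but unvisited vertices, the search can end with ordering out.
   Visiting the head v of the queue appends its undiscovered neighbours
   to the queue in an arbitrary order. *)
Inductive bfs_run : seq T -> seq T -> seq T -> Prop :=
| bfs_done vis : bfs_run vis [::] vis
| bfs_step vis v q new out :
    uniq new ->
    (forall w, (w \in new) = [&& e v w, w \notin vis & w \notin v :: q]) ->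
    bfs_run (rcons vis v) (q ++ new) out ->
    bfs_run vis (v :: q) out.

Definition is_bfs (s : seq T) : Prop := exists x0, bfs_run [::] [:: x0] s.

Definition lbfs_label (x0 : T) (p : seq T) (w : T) : seq nat :=
  (if w == x0 then [:: #|T|] else [::]) ++
  [seq #|T| - k.+1 | k <- nbr_steps p w].

Definition is_lbfs (s : seq T) : Prop :=
  is_ordering s /\ exists x0 : T,
    forall p v q, s = p ++ v :: q ->
      forall w, w \notin p -> lexle (lbfs_label x0 p w) (lbfs_label x0 p v).

Definition ldfs_label (x0 : T) (p : seq T) (w : T) : seq nat :=
  rev [seq k.+1 | k <- nbr_steps p w] ++
  (if w == x0 then [:: 0] else [::]).

Definition is_ldfs (s : seq T) : Prop :=
  is_ordering s /\ exists x0 : T,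
    forall p v q, s = p ++ v :: q ->
      forall w, w \notin p -> lexle (ldfs_label x0 p w) (ldfs_label x0 p v).

Definition mcs_label (p : seq T) (w : T) : nat := count (fun u => e u w) p.

Definition is_mcs (s : seq T) : Prop :=
  is_ordering s /\
    forall p v q, s = p ++ v :: q ->
      forall w, w \notin p -> mcs_label p w <= mcs_label p v.

Definition mns_label (x0 : T) (p : seq T) (w : T) : seq nat :=
  (if w == x0 then [:: #|T|.+1] else [::]) ++ [seq k.+1 | k <- nbr_steps p w].

Definition is_mns (s : seq T) : Prop :=
  is_ordering s /\ exists x0 : T,
    forall p v q, s = p ++ v :: q ->
      forall w, w \notin p ->
        {subset mns_label x0 p v <= mns_label x0 p w} ->
        {subset mns_label x0 p w <= mns_label x0 p v}.

Definition leftmost_nbr (s : seq T) (x : T) : T := nth x s (find (e x) s).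

Definition ftree (s : seq T) : rel T :=
  fun x y =>
    ((x != head x s) && (y == leftmost_nbr s x)) ||
    ((y != head y s) && (x == leftmost_nbr s y)).

Definition is_ftree_of (t : rel T) (s : seq T) : Prop := forall x y, t x y = ftree s x y.

End Graphs.

(* Main.v *)
Require Import Defs.
From mathcomp Require Import all_boot zify.
Set Implicit Arguments. Unset Strict Implicit. Unset Printing Implicit Defensive.

Lemma lexle_refl a : lexle a a.
Proof. by elim: a => //= x a ->; rewrite eqxx orbT. Qed.

Lemma lexle_total a b : lexle a b || lexle b a.
Proof.
elim: a b => [|x a IH] [|y b] //=.
case: (ltngtP x y) => // E; rewrite ?E ?orbT //= eqxx /=; exact: IH.
Qed.

Lemma lexle_trans a b c : lexle a b -> lexle b c -> lexle a c.
Proof.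
elim: a b c => [|x a IH] [|y b] [|z c] //=.
case/orP=> [xy|/andP[/eqP <- ab]]; case/orP=> [yz|/andP[/eqP <- bc]].
- by rewrite (ltn_trans xy yz).
- by rewrite xy.
- by rewrite yz.
- by rewrite eqxx (IH _ _ ab bc) orbT.
Qed.

Lemma lexle_anti a b : lexle a b -> lexle b a -> a = b.
Proof.
elim: a b => [|x a IH] [|y b] //=.
case/orP=> [xy|/andP[/eqP <- ab]]; case/orP=> [yx|/andP[/eqP E ba]].
- by move: (ltn_trans xy yx); rewrite ltnn.
- by move: xy; rewrite E ltnn.
- by move: yx; rewrite ltnn.
- by rewrite (IH _ ab ba).
Qed.

Lemma lexle_sub b a : sorted (fun x y : nat => y < x) b -> subseq a b -> lexle a b.
Proof.
elim: b a => [|y b IH] [|x a] //=.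
move=> srt; have sb : sorted (fun x y : nat => y < x) b by case: b srt {IH} => //= z b /andP[].
case: eqP => [->|xy] sub.
  by rewrite (IH _ sb sub) orbT.
have : x \in b by move: (mem_subseq sub); apply; rewrite inE eqxx.
have := order_path_min (fun u v w (h1 : u < v) (h2 : w < u) => ltn_trans h2 h1) srt.
by move/allP => H /H ->.
Qed.

Section Main.
Variable T : finType.
Variable e : rel T.
Hypothesis esymm : symmetric e.
Hypothesis eirr : irreflexive e.
Variables K I : {set T}.
Hypothesis KI0 : K :&: I = set0.
Hypothesis KIT : K :|: I = setT.
Hypothesis Kcl : {in K &, forall x y, x != y -> e x y}.
Hypothesis Iind : {in I &, forall x y, ~~ e x y}.
Hypothesis conn : forall x y, connect e x y.
Hypothesis Tne : 0 < #|T|.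

Lemma KorI x : (x \in K) || (x \in I).
Proof. by have := in_setT x; rewrite -KIT inE. Qed.
Lemma KnI x : x \in K -> x \in I -> False.
Proof. move=> hK hI; have : x \in K :&: I by rewrite inE hK hI. by rewrite KI0 inE. Qed.
Lemma nbrI r x : r \in I -> e r x -> x \in K.
Proof. move=> rI rx; case/orP: (KorI x) => // xI; by move: (Iind rI xI); rewrite rx. Qed.
Lemma neq_of_e x y : e x y -> x != y.
Proof. by apply: contraTneq => ->; rewrite eirr. Qed.

Lemma nbr_exists r x : x != r -> exists u, e r u.
Proof.
move=> xr; case/connectP: (conn r x) => [[|u p]] /= => [_ xe|/andP[ru _] _]; last by exists u.
by move: xr; rewrite xe eqxx.
Qed.

Lemma uniq_size (p : seq T) : uniq p -> size p <= #|T|.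
Proof. by move=> Up; rewrite -(card_uniqP Up) max_card. Qed.

Lemma nb_eq p a b : (forall u, u \in p -> e u a -> e u b) ->
  nbr_steps e p a = filter (fun k => e (nth a p k) a) (nbr_steps e p b).
Proof.
move=> H; rewrite /nbr_steps -filter_predI; apply: eq_in_filter => k.
rewrite mem_iota add0n /= => kp.
rewrite (set_nth_default b a kp).
by case E: (e _ a); rewrite //= (H _ (mem_nth _ kp) E).
Qed.

Lemma nb_sub p a b : (forall u, u \in p -> e u a -> e u b) ->
  subseq (nbr_steps e p a) (nbr_steps e p b).
Proof. by move=> H; rewrite (nb_eq H) filter_subseq. Qed.

Lemma nb_lt p a b : (forall u, u \in p -> e u a -> e u b) ->
  (exists2 u, u \in p & e u b && ~~ e u a) ->
  size (nbr_steps e p a) < size (nbr_steps e p b).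
Proof.
move=> H [u up /andP[ub ua]]; rewrite (nb_eq H) size_filter.
rewrite -(count_predC (fun k => e (nth a p k) a)) -{1}(addn0 (count _ _)) ltn_add2l -has_count.
apply/hasP; exists (index u p).
  rewrite /nbr_steps mem_filter mem_iota add0n index_mem up (nth_index _ up). by rewrite ub.
by rewrite /= nth_index.
Qed.

Lemma nb_sorted p w : sorted ltn (nbr_steps e p w).
Proof. exact/sorted_filter/iota_ltn_sorted/ltn_trans. Qed.

Lemma nb_bound p w k : k \in nbr_steps e p w -> k < size p.
Proof. by rewrite mem_filter mem_iota add0n => /andP[]. Qed.

Lemma nb_uniq p w : uniq (nbr_steps e p w).
Proof. exact/filter_uniq/iota_uniq. Qed.


Definition kf (s : seq T) := [seq x <- s | x \in K].
Definition SE (s : seq T) : Prop := match s with r :: v2 :: _ => e r v2 | _ => True end.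
Definition NP (s : seq T) : Prop :=
  match s with
  | [::] => True
  | r :: s1 => r \in I -> exists A B, s1 = A ++ B /\ all (e r) A /\ all (fun x => ~~ e r x) B
  end.

Definition legal (R : seq T -> T -> T -> Prop) (s : seq T) :=
  forall p v q, s = p ++ v :: q -> p != [::] -> forall w, w \notin p -> R p w v.
Definition gen R (s : seq T) := is_ordering s /\ legal R s.

Lemma split_rcons (p0 p q : seq T) v v' : p ++ v' :: q = rcons p0 v ->
  (q = [::] /\ p = p0 /\ v' = v) \/ exists q', q = rcons q' v /\ p0 = p ++ v' :: q'.
Proof.
case/lastP: q => [|q' x].
  by rewrite cats1 => /rcons_inj [-> ->]; left.
rewrite -rcons_cons -rcons_cat => /rcons_inj [<- ->]; right; by exists q'.
Qed.

Lemma prefix_sub (A B p q : seq T) v : A ++ B = p ++ v :: q -> v \notin A ->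
  forall x, x \in A -> x \in p.
Proof.
elim: A p => [|a A IH] [|b p] //=.
  by move=> [-> _]; rewrite inE eqxx.
move=> [-> E]; rewrite inE negb_or => /andP[_ vA] x; rewrite !inE.
by case/orP=> [->//|/(IH _ E vA) ->]; rewrite orbT.
Qed.

Lemma exmax (Q : rel T) (P : pred T) : (forall x y, Q x y || Q y x) ->
  (forall x y z, Q x y -> Q y z -> Q x z) -> (exists x, P x) ->
  exists v, P v /\ forall w, P w -> Q w v.
Proof.
move=> tot tr [x Px].
suff H : forall s : seq T, s != [::] -> exists2 v, v \in s & forall w, w \in s -> Q w v.
  have : [seq y <- enum T | P y] != [::].
    by rewrite -has_filter; apply/hasP; exists x; rewrite ?mem_enum.
  case/H => v; rewrite mem_filter => /andP[Pv _] Hv; exists v; split => // w Pw.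
  by apply: Hv; rewrite mem_filter Pw mem_enum.
elim => [//|y s IH] _.
have Qyy : Q y y by case/orP: (tot y y).
case: (altP (s =P [::])) => [->|/IH [v vs Hv]].
  by exists y; rewrite ?inE // => w; rewrite inE => /eqP ->.
case/orP: (tot y v) => [yv|vy].
  exists v; first by rewrite inE vs orbT.
  by move=> w; rewrite inE => /orP[/eqP ->//|/Hv].
exists y; first by rewrite inE eqxx.
by move=> w; rewrite inE => /orP[/eqP ->//|/Hv wv]; apply: tr wv vy.
Qed.

Section Gen.
Variable R : seq T -> T -> T -> Prop.
Hypothesis Hmono : forall p w v, uniq p -> p != [::] -> w \notin p -> v \notin p ->
  (forall u, u \in p -> e u w -> e u v) -> R p w v.
Hypothesis Hstrict : forall p a b, uniq p -> p != [::] -> a \notin p -> b \notin p ->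
  (forall u, u \in p -> e u a -> e u b) -> (exists2 u, u \in p & e u b && ~~ e u a) ->
  ~ R p b a.
Hypothesis Hmax : forall p, uniq p -> p != [::] -> (exists x, x \notin p) ->
  exists v, v \notin p /\ forall w, w \notin p -> R p w v.

Lemma ext_lemma m p0 : #|T| - size p0 <= m -> uniq p0 -> p0 != [::] -> legal R p0 ->
  exists rest, gen R (p0 ++ rest).
Proof.
elim: m p0 => [|m IH] p0 hm U0 n0 L0; case: (pickP (fun x => x \notin p0)) => [x xp|allin].
- have [v [vp Hv]] := Hmax U0 n0 (ex_intro _ x xp).
  have : uniq (rcons p0 v) by rewrite rcons_uniq vp U0.
  move/uniq_size; rewrite size_rcons => H; move: hm; rewrite leqn0 subn_eq0 => H2.
  by move: (leq_trans H H2); rewrite ltnn.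
- exists [::]; rewrite cats0; split => //; split => // y.
  by move: (allin y) => /= /negbFE.
- have [v [vp Hv]] := Hmax U0 n0 (ex_intro _ x xp).
  have U1 : uniq (rcons p0 v) by rewrite rcons_uniq vp U0.
  have L1 : legal R (rcons p0 v).
    move=> p v' q E pn w wp; case: (split_rcons (esym E)) => [[_ [Ep Ev]]|[q' [_ E']]].
      by subst; apply: Hv.
    exact: L0 E' pn w wp.
  have hm' : #|T| - size (rcons p0 v) <= m.
    move: (uniq_size U1); rewrite size_rcons => H; move: hm; lia.
  have n1 : rcons p0 v != [::] by case: (p0) .
  case: (IH _ hm' U1 n1 L1) => rest G; exists (v :: rest); by rewrite -cat_rcons.
- exists [::]; rewrite cats0; split => //; split => // y.
  by move: (allin y) => /= /negbFE.
Qed.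

Lemma uniq_mid (p q : seq T) v : uniq (p ++ v :: q) -> v \notin p /\ uniq p.
Proof. by rewrite cat_uniq /= negb_or => /and3P[? /andP[? _] _]. Qed.

Lemma all_take_find (a : pred T) s : all (predC a) (take (find a s) s).
Proof. by elim: s => //= x s IH; case E: (a x) => //=; rewrite E IH. Qed.

Lemma gen_SE s : gen R s -> SE s.
Proof.
case: s => [|r [|v2 s']] // [[U _] L] /=.
have v2r : v2 != r by move: U => /=; rewrite inE negb_or => /andP[/andP[/negbTE]]; rewrite eq_sym => ->.
have [u ru] := nbr_exists v2r.
have ur : u \notin [:: r] by rewrite inE eq_sym neq_of_e.
have vr : v2 \notin [:: r] by rewrite inE.
have HR := L [:: r] v2 s' erefl isT u ur.
apply/negPn/negP => rv2; apply: (Hstrict (p:=[:: r]) (a:=v2) (b:=u)) => //.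
- by move=> z; rewrite inE => /eqP -> /(negP rv2).
- by exists r; rewrite ?inE // ru rv2.
Qed.

Lemma gen_NP s : gen R s -> NP s.
Proof.
case: s => [|r s1] // [[U _] L] /= rI.
set i := find (fun x => ~~ e r x) s1.
exists (take i s1), (drop i s1); split; first by rewrite cat_take_drop.
split.
  apply/allP => y /(allP (all_take_find (fun x => ~~ e r x) s1)) /=; by rewrite negbK.
apply/allP => b bB; apply/negP => rb.
have hi : i < size s1.
  by rewrite ltnNge; apply/negP => H; move: bB; rewrite drop_oversize.
set a0 := nth r s1 i.
have ra0 : ~~ e r a0 by apply: (nth_find r (a:=fun x => ~~ e r x)); rewrite has_find.
have E : r :: s1 = (r :: take i s1) ++ a0 :: drop i.+1 s1 by rewrite /= -drop_nth // cat_take_drop.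
have bD : b \in a0 :: drop i.+1 s1 by rewrite -drop_nth.
have [bp a0p Up] : [/\ b \notin r :: take i s1, a0 \notin r :: take i s1 & uniq (r :: take i s1)].
  move: U; rewrite E cat_uniq => /and3P[U1 H _]; split => //.
    by apply: contra H => bp; apply/hasP; exists b.
  by apply: contra H => bp; apply/hasP; exists a0; rewrite ?inE ?eqxx.
have HR := L _ _ _ E isT b bp.
apply: (Hstrict (p := r :: take i s1) (a := a0) (b := b)) => //.
- move=> u; rewrite inE => /orP[/eqP ->|uA]; first by move/(negP ra0).
  move=> _; have ru : e r u.
    by move: (allP (all_take_find (fun x => ~~ e r x) s1) u uA) => /=; rewrite negbK.
  apply: Kcl; [exact: nbrI ru|exact: nbrI rb|].
  by apply: contraNneq bp => <-; rewrite inE uA orbT.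
- by exists r; rewrite ?inE ?eqxx // rb ra0.
Qed.

Lemma gen_build r s1 : is_ordering (r :: s1) -> NP (r :: s1) ->
  exists t1, gen R (r :: t1) /\ kf (r :: t1) = kf (r :: s1).
Proof.
move=> [U all_in] np.
have rs1 : r \notin s1 by move: U => /= /andP[].
have U0 : uniq (r :: kf s1) by rewrite /= /kf mem_filter negb_and rs1 orbT filter_uniq //; case/andP: U.
have L0 : legal R (r :: kf s1).
  move=> [|b p1] v q //= E _ w wp.
  case: E => Eb E; subst b.
  have vK : v \in K.
    have : v \in p1 ++ v :: q by rewrite mem_cat mem_head orbT.
    by rewrite -E mem_filter => /andP[].
  have U' : uniq ((r :: p1) ++ v :: q) by rewrite /= -E.
  have [vp Up] := uniq_mid U'.
  apply: Hmono => //.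
  move=> u; rewrite inE => /orP[/eqP ->|up1] rw.
  - case/orP: (KorI r) => [rK|rI].
      by apply: Kcl => //; apply: contraNneq vp => ->; rewrite inE eqxx.
    apply/negPn/negP => rv.
    have [A [B [EAB [allA allB]]]] := np rI.
    have wK := nbrI rI rw.
    have ws1 : w \in s1.
      by move: (all_in w); rewrite inE => /orP[/eqP wr|//]; move: rw; rewrite wr eirr.
    have wA : w \in kf A.
      rewrite mem_filter wK /=; move: ws1; rewrite EAB mem_cat => /orP[//|wB].
      by move: (allP allB w wB); rewrite rw.
    have vA : v \notin kf A.
      by apply/negP; rewrite mem_filter => /andP[_ /(allP allA)]; apply/negP.
    have E2 : kf A ++ kf B = p1 ++ v :: q by rewrite -filter_cat -EAB.
    by move: wp; rewrite inE (prefix_sub E2 vA wA) orbT.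
  - apply: Kcl => //.
      have : u \in p1 ++ v :: q by rewrite mem_cat up1.
      by rewrite -E mem_filter => /andP[].
    by apply: contraNneq vp => <-; rewrite inE up1 orbT.
have [rest [[U1 all1] L1]] := @ext_lemma #|T| (r :: kf s1) (leq_subr _ _) U0 isT L0.
exists (kf s1 ++ rest); split; first by split.
have -> : kf rest = [::] -> kf (r :: kf s1 ++ rest) = kf (r :: s1).
  by rewrite /kf /= filter_cat filter_id => ->; rewrite cats0.
  by [].
apply/eqP; rewrite -[_ == _]negbK -has_filter; apply/hasP => [[x xr xK]].
move: U1; rewrite cat_uniq => /and3P[_ H _]; apply/negP: H; apply/negPn/hasP; exists x => //.
move: (all_in x); rewrite !inE => /orP[->//|xs1]; by rewrite mem_filter xK xs1 orbT.
Qed.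
End Gen.

Lemma lm_cons y s x : leftmost_nbr e (y :: s) x = if e x y then y else leftmost_nbr e s x.
Proof. by rewrite /leftmost_nbr /=; case: (e x y). Qed.

Lemma lm_filter (P : pred T) s x : (forall y, y \in s -> e x y -> P y) ->
  leftmost_nbr e s x = leftmost_nbr e (filter P s) x.
Proof.
elim: s => //= y s IH H; rewrite lm_cons.
have IH' : leftmost_nbr e s x = leftmost_nbr e [seq z <- s | P z] x.
  by apply: IH => z zs; apply: H; rewrite inE zs orbT.
case exy: (e x y).
  by rewrite (H y (mem_head _ _) exy) lm_cons exy.
by case: (P y); rewrite ?lm_cons ?exy IH'.
Qed.

Lemma ftree_eq r s1 t1 : is_ordering (r :: s1) -> is_ordering (r :: t1) ->
  SE (r :: s1) -> SE (r :: t1) -> kf (r :: s1) = kf (r :: t1) ->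
  forall x y, ftree e (r :: s1) x y = ftree e (r :: t1) x y.
Proof.
move=> [Us As] [Ut At] SEs SEt Ekf.
have lm_eq : forall x, x != r -> leftmost_nbr e (r :: s1) x = leftmost_nbr e (r :: t1) x.
  move=> x xr; case/orP: (KorI x) => [xK|xI].
  - rewrite !lm_cons; case exr: (e x r) => //.
    case/orP: (KorI r) => [rK|rI]; first by move: exr; rewrite Kcl.
    have rK : r \notin K by apply/negP => /KnI; apply.
    have xs : x \in s1 by move: (As x); rewrite inE (negbTE xr).
    have xt : x \in t1 by move: (At x); rewrite inE (negbTE xr).
    case: s1 Us As SEs Ekf xs => [//|v2 s1'] _ _ /= rv2 Ekf _.
    case: t1 Ut At SEt Ekf xt => [//|v3 t1'] _ _ /= rv3 Ekf _.
    have v2K := nbrI rI rv2; have v3K := nbrI rI rv3.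
    move: Ekf; rewrite /kf /= (negbTE rK) v2K v3K => -[<- _].
    rewrite !lm_cons Kcl //; apply: contraFneq exr => ->; by rewrite esymm.
  - have HP : forall s : seq T, (forall y, y \in s -> e x y -> (fun z => z \in K) y).
      move=> s z zs xz /=; exact: (nbrI xI xz).
    rewrite (lm_filter (HP (r :: s1))) (lm_filter (HP (r :: t1))).
    by rewrite -/(kf _) Ekf.
move=> x y; rewrite /ftree /=.
case: (eqVneq x r) => [->|xr]; case: (eqVneq y r) => [->|yr] //=; rewrite ?lm_eq //.
Qed.

Lemma transfer (P1 P2 : seq T -> Prop) t :
  (forall s, P1 s -> [/\ is_ordering s, SE s & NP s]) ->
  (forall s, P2 s -> [/\ is_ordering s, SE s & NP s]) ->
  (forall r s1, is_ordering (r :: s1) -> NP (r :: s1) ->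
     exists t1, P2 (r :: t1) /\ kf (r :: t1) = kf (r :: s1)) ->
  (exists s, P1 s /\ is_ftree_of e t s) -> exists s, P2 s /\ is_ftree_of e t s.
Proof.
move=> H1 H2 B [[|r s1] [P1s Ft]].
  case: (H1 _ P1s) => [[_ A] _ _]; case/card_gt0P: Tne => x _; by move: (A x).
case: (H1 _ P1s) => O1 S1 N1.
have [t1 [P2t Ek]] := B r s1 O1 N1.
case: (H2 _ P2t) => O2 S2 _.
exists (r :: t1); split => // x y; rewrite Ft; exact: ftree_eq.
Qed.

Lemma bfs_shape vis q out : bfs_run e vis q out -> exists rest, out = vis ++ q ++ rest.
Proof.
elim => [vis'|vis' v q' new out' _ _ _ [rest ->]].
  by exists [::]; rewrite /= cats0.
by exists (new ++ rest); rewrite cat_rcons -!catA.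
Qed.

Lemma bfs_uniq vis q out : bfs_run e vis q out -> uniq (vis ++ q) -> uniq out.
Proof.
elim => [vis' //|vis' v q' new out' Un Hn _ IH] U; first by rewrite cats0 in U.
apply: IH; rewrite cat_rcons -[v :: q' ++ new]/((v :: q') ++ new) catA cat_uniq U Un andbT.
apply/hasPn => w; rewrite Hn => /and3P[_ wv wq]; by rewrite mem_cat negb_or wv wq.
Qed.

Lemma bfs_closed vis q out : bfs_run e vis q out ->
  (forall x y, x \in vis -> e x y -> y \in vis ++ q) ->
  forall x y, x \in out -> e x y -> y \in out.
Proof.
elim => [vis'|vis' v q' new out' Un Hn _ IH] Hc.
  by move=> x y xv exy; move: (Hc x y xv exy); rewrite cats0.
apply: IH => x y; rewrite mem_rcons inE => /orP[/eqP->|xv] exy.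
- rewrite cat_rcons mem_cat; case yv: (y \in vis') => //=.
  rewrite inE; case: (eqVneq y v) => //= ynv; rewrite mem_cat.
  case yq: (y \in q') => //=; by rewrite Hn exy yv /= inE (negbTE ynv) yq.
- move: (Hc x y xv exy); rewrite cat_rcons !(mem_cat, inE).
  by case/orP=> [H|/orP[H|H]]; rewrite H ?orbT.
Qed.

Lemma closed_all (s : seq T) x0 : x0 \in s -> (forall x y, x \in s -> e x y -> y \in s) ->
  forall y, y \in s.
Proof.
move=> x0s Hc y; case/connectP: (conn x0 y) => p pth ->.
elim: p x0 x0s pth => //= z p IH x0 x0s /andP[xz pth].
exact: IH (Hc _ _ x0s xz) pth.
Qed.

Lemma bfs_props s : is_bfs e s -> [/\ is_ordering s, SE s & NP s].
Proof.
move=> [x0 H].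
have U : uniq s by apply: (bfs_uniq H).
have O : is_ordering s.
  split => //; apply: (closed_all (x0 := x0)).
    by case: (bfs_shape H) => rest ->; rewrite mem_head.
  by apply: (bfs_closed H).
inversion H as [|vis v q new out Un Hn H']; subst.
have [rest Es] := bfs_shape H'.
move: Es; rewrite /= => Es.
split => //.
- case: new Un Hn H' Es => [|n1 new] Un Hn H' Es.
    by inversion H'.
  by rewrite Es /=; move: (Hn n1); rewrite mem_head => /esym /andP[].
- rewrite Es /= => x0I; exists new, rest; split => //; split.
    by apply/allP => w; rewrite Hn => /andP[].
  apply/allP => b brest; apply/negP => xb.
  move: U; rewrite Es /= cat_uniq => /andP[_ /and3P[_ /hasPn H1 _]].
  move: (H1 b brest); rewrite Hn xb /= inE eq_sym neq_of_e //.
Qed.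

Lemma mem_tail (r : T) s1 : is_ordering (r :: s1) -> forall w, (w \in s1) = (w != r).
Proof.
move=> [U A] w; move: (A w); rewrite inE; case: (eqVneq w r) => [->|//].
by move: U => /= /andP[/negbTE].
Qed.

Lemma kf_I s : all (fun x => x \in I) s -> kf s = [::].
Proof.
elim: s => //= x s IH /andP[xI As]; rewrite /kf /=.
have -> : (x \in K) = false by apply/negP => /KnI; apply.
exact: IH.
Qed.

Lemma kf_K s : all (fun x => x \in K) s -> kf s = s.
Proof. by move/all_filterP. Qed.

Lemma bfsK qK : forall (vis : seq T) qI, all (fun x => x \in I) qI ->
  (forall x, x \in K -> x \in vis ++ qK) ->
  exists rest, bfs_run e vis (qK ++ qI) (vis ++ qK ++ rest) /\ all (fun x => x \in I) rest.
Proof.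
elim: qK => [|k qK IH] vis qI AI KV.
- rewrite /=; elim: qI vis AI KV => [|y qI IHq] vis /= AI KV.
    by exists [::]; rewrite /= cats0; split => //; exact: bfs_done.
  case/andP: AI => yI AI.
  have KV' : forall x, x \in K -> x \in rcons vis y ++ [::].
    by move=> x /KV; rewrite !cats0 mem_rcons inE orbC => ->.
  have [rest [Hr Ar]] := IHq (rcons vis y) AI KV'.
  exists (y :: rest); split; last by rewrite /= yI.
  apply: (bfs_step (new := [::])) => //.
    move=> w; rewrite in_nil; apply/esym/and3P => [[yw wv _]].
    by move: (KV w (nbrI yI yw)); rewrite cats0 (negbTE wv).
  by rewrite cats0; move: Hr; rewrite cat_rcons.
- set new := [seq w <- enum T | [&& e k w, w \notin vis & w \notin k :: qK ++ qI]].
  have Anew : all (fun x => x \in I) new.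
    apply/allP => w; rewrite mem_filter => /andP[/and3P[_ wv wq] _].
    case/orP: (KorI w) => // wK; move: (KV w wK); rewrite mem_cat (negbTE wv) /=.
    by move: wq; rewrite !inE mem_cat negb_or => /andP[/negbTE -> /norP[/negbTE -> _]].
  have KV' : forall x, x \in K -> x \in rcons vis k ++ qK by move=> x; rewrite cat_rcons; apply: KV.
  have AI' : all (fun x => x \in I) (qI ++ new) by rewrite all_cat AI Anew.
  have [rest [Hr Ar]] := IH (rcons vis k) (qI ++ new) AI' KV'.
  exists rest; split => //.
  apply: (bfs_step (new := new)).
  + exact/filter_uniq/enum_uniq.
  + by move=> w; rewrite mem_filter mem_enum andbT.
  + by rewrite -catA; move: Hr; rewrite cat_rcons.
Qed.

Lemma bfs_build r s1 : is_ordering (r :: s1) -> NP (r :: s1) ->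
  exists t1, is_bfs e (r :: t1) /\ kf (r :: t1) = kf (r :: s1).
Proof.
move=> O np; have ws1 := mem_tail O.
have [U _] := O; have Us1 : uniq s1 by case/andP: U.
case/orP: (KorI r) => [rK|rI].
- set NI := enum [pred w | e r w && (w \in I)].
  have Hspec : forall w, (w \in kf s1 ++ NI) = [&& e r w, w \notin [::] & w \notin [:: r]].
    move=> w; rewrite mem_cat mem_filter mem_enum in_nil inE /=.
    case/orP: (KorI w) => [wK|wI].
      have wnI : (w \in I) = false by apply/negP => /(KnI wK).
      rewrite wK wnI ws1 /= andbF orbF; case: (eqVneq w r) => [->|wr]; first by rewrite eirr.
      by rewrite inE wr Kcl // eq_sym.
    have wnK : (w \in K) = false by apply/negP => /KnI; apply.
    rewrite wnK wI /= ?inE; case: (eqVneq w r) => [->|wr] /=; by rewrite ?eirr ?andbT.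
  have Unew : uniq (kf s1 ++ NI).
    rewrite cat_uniq filter_uniq // enum_uniq andbT.
    apply/hasPn => w; rewrite mem_enum inE mem_filter => /andP[_ wI].
    by apply/negP => /andP[wK _]; apply: (KnI wK wI).
  have AI : all (fun x => x \in I) NI by apply/allP => w; rewrite mem_enum inE => /andP[].
  have KV : forall x, x \in K -> x \in [:: r] ++ kf s1.
    move=> x xK; rewrite /= inE mem_filter xK ws1 /=; by case: eqVneq.
  have [rest [Hr Ar]] := bfsK AI KV.
  exists (kf s1 ++ rest); split.
    exists r; apply: (bfs_step (new := kf s1 ++ NI)) => //.
  by rewrite /kf /= rK filter_cat filter_id -/(kf rest) (kf_I Ar) cats0.
- have [A [B [EAB [allA allB]]]] := np rI.
  have AK : all (fun x => x \in K) A by apply/allP => x /(allP allA) /(nbrI rI).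
  have UAB : uniq (A ++ B) by rewrite -EAB.
  have HspecA : forall w, (w \in A) = [&& e r w, w \notin [::] & w \notin [:: r]].
    move=> w; apply/idP/idP.
      move=> wA; have rw := allP allA w wA; by rewrite rw inE eq_sym neq_of_e.
    rewrite in_nil inE /= => /andP[rw wr]; move: (ws1 w); rewrite wr EAB mem_cat.
    case/orP => // wB; by move: (allP allB w wB); rewrite rw.
  have UA : uniq A by move: UAB; rewrite cat_uniq => /andP[].
  case EA: A => [|a1 A''].
    have s10 : s1 = [::].
      case: s1 ws1 EAB {np Us1 U O} => [//|x s1'] ws1 _.
      have xr : x != r by rewrite -ws1 mem_head.
      have [u ru] := nbr_exists xr.
      by move: (HspecA u); rewrite EA in_nil !inE ru /= eq_sym (neq_of_e ru).
    exists [::]; split; last by rewrite s10.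
    exists r; apply: (bfs_step (new := [::])) => //; last exact: bfs_done.
    by move=> w; rewrite -HspecA EA.
  have a1A : a1 \in A by rewrite EA mem_head.
  have a1K : a1 \in K := allP AK a1 a1A.
  set NI1 := enum [pred w | [&& e a1 w, w \in I & w != r]].
  have UB : uniq B by move: UAB; rewrite cat_uniq => /and3P[].
  have disAB : forall w, w \in A -> w \in B -> False.
    move=> w wA wB; move: UAB; rewrite cat_uniq => /and3P[_ /hasPn /(_ w wB)]; by rewrite wA.
  have spec1 : forall w, (w \in kf B ++ NI1) = [&& e a1 w, w \notin [:: r] & w \notin a1 :: A''].
    move=> w; rewrite -EA mem_cat mem_filter mem_enum !inE.
    case/orP: (KorI w) => [wK|wI].
      have wnI : (w \in I) = false by apply/negP => /(KnI wK).
      rewrite wK wnI /= andbF orbF; apply/idP/idP.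
        move=> wB; have wr : w != r by rewrite -ws1 EAB mem_cat wB orbT.
        have wA : w \notin A by apply/negP => /disAB; apply.
        rewrite wr wA andbT Kcl //; apply: contraNneq wA => <-; exact: a1A.
      case/and3P=> _ wr wA; move: (ws1 w); rewrite wr EAB mem_cat (negbTE wA) //.
    have wnK : (w \in K) = false by apply/negP => /KnI; apply.
    have wA : w \notin A by apply/negP => /(allP AK); rewrite wnK.
    by rewrite wnK wI wA /= andbT.
  have Unew1 : uniq (kf B ++ NI1).
    rewrite cat_uniq filter_uniq // enum_uniq andbT.
    apply/hasPn => w; rewrite mem_enum inE mem_filter => /and3P[_ wI _].
    by apply/negP => /andP[wK _]; apply: (KnI wK wI).
  have AI : all (fun x => x \in I) NI1 by apply/allP => w; rewrite mem_enum inE => /and3P[].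
  have KV : forall x, x \in K -> x \in [:: r; a1] ++ (A'' ++ kf B).
    move=> x xK; have xr : x != r by apply: contraTneq xK => ->; apply/negP => /KnI; apply.
    move: (ws1 x); rewrite xr EAB mem_cat EA inE => /orP[/orP[/eqP->|xA]|xB].
      by rewrite /= !inE eqxx orbT.
      by rewrite /= !inE mem_cat xA !orbT.
    by rewrite /= !inE mem_cat mem_filter xK xB !orbT.
  have [rest [Hr Ar]] := bfsK AI KV.
  exists (a1 :: (A'' ++ kf B) ++ rest); split.
    exists r; apply: (bfs_step (new := a1 :: A'')); first by rewrite -EA.
      by move=> w; rewrite -HspecA EA.
    apply: (bfs_step (new := kf B ++ NI1)) => //.
    by rewrite catA.
  have rnK : (r \in K) = false by apply/negP => /KnI; apply.
  rewrite /kf /= rnK EAB filter_cat -/(kf _) !filter_cat -!/(kf _) (kf_I Ar) cats0.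
  have AK'' : all (fun x => x \in K) A'' by move: AK; rewrite EA => /andP[].
  rewrite a1K /kf filter_cat filter_id -/(kf A'') -/(kf B) (kf_K AK'') -/(kf A) (kf_K AK) EA.
  done.
Qed.

Lemma gen_props (R : seq T -> T -> T -> Prop)
  (Hs : forall p a b, uniq p -> p != [::] -> a \notin p -> b \notin p ->
    (forall u, u \in p -> e u a -> e u b) -> (exists2 u, u \in p & e u b && ~~ e u a) ->
    ~ R p b a) s : gen R s -> [/\ is_ordering s, SE s & NP s].
Proof. move=> G; split; [by case: G|exact: (gen_SE Hs G)|exact: (gen_NP Hs G)]. Qed.

Lemma ord_ne (s : seq T) : is_ordering s -> s != [::].
Proof. by case: s => // [[_ A]]; case/card_gt0P: Tne => x _; move: (A x). Qed.

Definition Rl (p : seq T) (w v : T) : Prop :=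
  lexle (lbfs_label e (head w p) p w) (lbfs_label e (head w p) p v).

Lemma lbfs_lab r p' w : w \notin r :: p' ->
  lbfs_label e r (r :: p') w = [seq #|T| - k.+1 | k <- nbr_steps e (r :: p') w].
Proof. by rewrite inE negb_or => /andP[/negbTE wr _]; rewrite /lbfs_label wr. Qed.

Lemma lbfs_sorted p w : uniq p ->
  sorted (fun x y : nat => y < x) [seq #|T| - k.+1 | k <- nbr_steps e p w].
Proof.
move=> Up; have sz := uniq_size Up.
rewrite sorted_map; apply: (sub_in_sorted (P := fun k => k < size p) (e := ltn)); last exact: nb_sorted.
  move=> x y xp yp; move: xp yp; rewrite !unfold_in /= => xp yp xy; move: sz xp yp xy; set n := #|T|; set m := size p; move=> sz xp yp xy; lia.
by apply/allP => k /nb_bound.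
Qed.

Lemma Rl_mono p w v : uniq p -> p != [::] -> w \notin p -> v \notin p ->
  (forall u, u \in p -> e u w -> e u v) -> Rl p w v.
Proof.
case: p => [//|r p'] Up _ wp vp H; rewrite /Rl /= !lbfs_lab //.
apply: lexle_sub; [exact: lbfs_sorted|exact/map_subseq/nb_sub].
Qed.

Lemma Rl_strict p a b : uniq p -> p != [::] -> a \notin p -> b \notin p ->
  (forall u, u \in p -> e u a -> e u b) -> (exists2 u, u \in p & e u b && ~~ e u a) ->
  ~ Rl p b a.
Proof.
case: p => [//|r p'] Up _ ap bp H Hu; rewrite /Rl /= !lbfs_lab // => HR.
have HL : lexle [seq #|T| - k.+1 | k <- nbr_steps e (r :: p') a]
                [seq #|T| - k.+1 | k <- nbr_steps e (r :: p') b].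
  apply: lexle_sub; [exact: lbfs_sorted|exact/map_subseq/nb_sub].
have := lexle_anti HL HR => /(congr1 size); rewrite !size_map => E.
by move: (nb_lt H Hu); rewrite E ltnn.
Qed.

Lemma Rl_max p : uniq p -> p != [::] -> (exists x, x \notin p) ->
  exists v, v \notin p /\ forall w, w \notin p -> Rl p w v.
Proof.
case: p => [//|r p'] _ _ ex; rewrite /Rl /=.
apply: (exmax (Q := fun w v => lexle (lbfs_label e r (r :: p') w) (lbfs_label e r (r :: p') v))
               (P := fun x => x \notin r :: p')) => //.
- by move=> x y; exact: lexle_total.
- by move=> x y z; exact: lexle_trans.
Qed.

Lemma lbfs_gen s : is_lbfs e s <-> gen Rl s.
Proof.
split.
- move=> [O [x0 H]]; split => //.
  have hs : head x0 s = x0.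
    case: s O H => [/ord_ne //|v q] _ H; move: (H [::] v q erefl x0 isT).
    by rewrite /lbfs_label /= eqxx; case: eqP.
  move=> [|b p] v q Es _ w wp //; rewrite /Rl /=.
  by move: hs (H _ _ _ Es w wp); rewrite Es /= => ->.
- move=> [O L]; split => //.
  case: s O L => [/ord_ne //|x0 s'] _ L; exists x0.
  move=> [|b p] v q Es w wp.
    case: Es => <- _; rewrite /lbfs_label /nbr_steps /=; case: eqP => _ /=; by rewrite ?eqxx /= ?eqxx ?orbT.
  by case: Es (L _ _ _ Es isT w wp) => <- _; rewrite /Rl.
Qed.

Definition Rd (p : seq T) (w v : T) : Prop :=
  lexle (ldfs_label e (head w p) p w) (ldfs_label e (head w p) p v).

Lemma ldfs_lab r p' w : w \notin r :: p' ->
  ldfs_label e r (r :: p') w = rev [seq k.+1 | k <- nbr_steps e (r :: p') w].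
Proof. by rewrite inE negb_or => /andP[/negbTE wr _]; rewrite /ldfs_label wr cats0. Qed.

Lemma ldfs_sorted p w : sorted (fun x y : nat => y < x) (rev [seq k.+1 | k <- nbr_steps e p w]).
Proof.
rewrite rev_sorted sorted_map; apply: (sub_sorted _ (nb_sorted p w)).
by move=> x y /=; rewrite ltnS.
Qed.

Lemma ldfs_sub p a b : (forall u, u \in p -> e u a -> e u b) ->
  subseq (rev [seq k.+1 | k <- nbr_steps e p a]) (rev [seq k.+1 | k <- nbr_steps e p b]).
Proof. by move=> H; rewrite subseq_rev; apply/map_subseq/nb_sub. Qed.

Lemma Rd_mono p w v : uniq p -> p != [::] -> w \notin p -> v \notin p ->
  (forall u, u \in p -> e u w -> e u v) -> Rd p w v.
Proof.
case: p => [//|r p'] Up _ wp vp H; rewrite /Rd /= !ldfs_lab //.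
apply: lexle_sub; [exact: ldfs_sorted|exact: ldfs_sub].
Qed.

Lemma Rd_strict p a b : uniq p -> p != [::] -> a \notin p -> b \notin p ->
  (forall u, u \in p -> e u a -> e u b) -> (exists2 u, u \in p & e u b && ~~ e u a) ->
  ~ Rd p b a.
Proof.
case: p => [//|r p'] Up _ ap bp H Hu; rewrite /Rd /= !ldfs_lab // => HR.
have HL := lexle_sub (ldfs_sorted (r :: p') b) (ldfs_sub H).
have := lexle_anti HL HR => /(congr1 size); rewrite !size_rev !size_map => E.
by move: (nb_lt H Hu); rewrite E ltnn.
Qed.

Lemma Rd_max p : uniq p -> p != [::] -> (exists x, x \notin p) ->
  exists v, v \notin p /\ forall w, w \notin p -> Rd p w v.
Proof.
case: p => [//|r p'] _ _ ex; rewrite /Rd /=.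
apply: (exmax (Q := fun w v => lexle (ldfs_label e r (r :: p') w) (ldfs_label e r (r :: p') v))
               (P := fun x => x \notin r :: p')) => //.
- by move=> x y; exact: lexle_total.
- by move=> x y z; exact: lexle_trans.
Qed.

Lemma ldfs_gen s : is_ldfs e s <-> gen Rd s.
Proof.
split.
- move=> [O [x0 H]]; split => //.
  have hs : head x0 s = x0.
    case: s O H => [/ord_ne //|v q] _ H; move: (H [::] v q erefl x0 isT).
    by rewrite /ldfs_label /= eqxx; case: eqP.
  move=> [|b p] v q Es _ w wp //; rewrite /Rd /=.
  by move: hs (H _ _ _ Es w wp); rewrite Es /= => ->.
- move=> [O L]; split => //.
  case: s O L => [/ord_ne //|x0 s'] _ L; exists x0.
  move=> [|b p] v q Es w wp.
    case: Es => <- _; rewrite /ldfs_label /nbr_steps /=; case: eqP => _ /=; by rewrite ?eqxx /= ?eqxx ?orbT.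
  by case: Es (L _ _ _ Es isT w wp) => <- _; rewrite /Rd.
Qed.

Definition Rc (p : seq T) (w v : T) : Prop := mcs_label e p w <= mcs_label e p v.

Lemma count_mono_in (a b : pred T) s : (forall u, u \in s -> a u -> b u) -> count a s <= count b s.
Proof.
elim: s => //= x s IH H.
have IH' : count a s <= count b s by apply: IH => u us; apply: H; rewrite inE us orbT.
case ax: (a x); last by apply: leq_add.
by rewrite (H x (mem_head _ _) ax) /= ltnS IH'.
Qed.

Lemma count_lt_in (a b : pred T) s : (forall u, u \in s -> a u -> b u) ->
  (exists2 u, u \in s & b u && ~~ a u) -> count a s < count b s.
Proof.
elim: s => [|x s IH] H [u] //=.
have H' : forall u, u \in s -> a u -> b u by move=> z zs; apply: H; rewrite inE zs orbT.
rewrite inE => /orP[/eqP ->|us] Hu.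
  case/andP: Hu => -> /negbTE ->; by rewrite add0n add1n ltnS count_mono_in.
have := IH H' (ex_intro2 _ _ u us Hu) => lt.
case ax: (a x).
  by rewrite (H x (mem_head _ _) ax) /= ltnS.
by apply: (leq_trans lt); rewrite leq_addl.
Qed.

Lemma Rc_mono p w v : uniq p -> p != [::] -> w \notin p -> v \notin p ->
  (forall u, u \in p -> e u w -> e u v) -> Rc p w v.
Proof. by move=> _ _ _ _ H; exact: count_mono_in. Qed.

Lemma Rc_strict p a b : uniq p -> p != [::] -> a \notin p -> b \notin p ->
  (forall u, u \in p -> e u a -> e u b) -> (exists2 u, u \in p & e u b && ~~ e u a) ->
  ~ Rc p b a.
Proof.
move=> _ _ _ _ H Hu; rewrite /Rc => HR.
by move: (count_lt_in H Hu); rewrite /mcs_label ltnNge => /negP.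
Qed.

Lemma Rc_max p : uniq p -> p != [::] -> (exists x, x \notin p) ->
  exists v, v \notin p /\ forall w, w \notin p -> Rc p w v.
Proof.
move=> _ _ ex; apply: (exmax (Q := fun w v => mcs_label e p w <= mcs_label e p v)
               (P := fun x => x \notin p)) => //.
- by move=> x y; exact: leq_total.
- by move=> x y z; exact: leq_trans.
Qed.

Lemma mcs_gen s : is_mcs e s <-> gen Rc s.
Proof.
split.
- by move=> [O H]; split => // p v q Es _ w wp; apply: H Es w wp.
- move=> [O L]; split => // [[|b p]] v q Es w wp //.
  exact: (L _ _ _ Es isT w wp).
Qed.

Definition Rn (p : seq T) (w v : T) : Prop :=
  {subset mns_label e (head w p) p v <= mns_label e (head w p) p w} ->
  {subset mns_label e (head w p) p w <= mns_label e (head w p) p v}.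

Lemma mns_lab r p' w : w \notin r :: p' ->
  mns_label e r (r :: p') w = [seq k.+1 | k <- nbr_steps e (r :: p') w].
Proof. by rewrite inE negb_or => /andP[/negbTE wr _]; rewrite /mns_label wr. Qed.

Lemma mem_mapS k (s : seq nat) : (k.+1 \in [seq i.+1 | i <- s]) = (k \in s).
Proof. by rewrite mem_map //; move=> x y []. Qed.

Lemma Rn_mono p w v : uniq p -> p != [::] -> w \notin p -> v \notin p ->
  (forall u, u \in p -> e u w -> e u v) -> Rn p w v.
Proof.
case: p => [//|r p'] Up _ wp vp H; rewrite /Rn /= !mns_lab // => _.
exact/mem_subseq/map_subseq/nb_sub.
Qed.

Lemma Rn_strict p a b : uniq p -> p != [::] -> a \notin p -> b \notin p ->
  (forall u, u \in p -> e u a -> e u b) -> (exists2 u, u \in p & e u b && ~~ e u a) ->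
  ~ Rn p b a.
Proof.
case: p => [//|r p'] Up _ ap bp H Hu; rewrite /Rn /= !mns_lab // => HR.
have HL := HR (mem_subseq (map_subseq _ (nb_sub H))).
have sub : {subset nbr_steps e (r :: p') b <= nbr_steps e (r :: p') a}.
  by move=> k kb; rewrite -mem_mapS; apply: HL; rewrite mem_mapS.
move: (uniq_leq_size (nb_uniq _ _) sub); rewrite leqNgt => /negP; apply.
exact: nb_lt.
Qed.

Lemma Rn_max p : uniq p -> p != [::] -> (exists x, x \notin p) ->
  exists v, v \notin p /\ forall w, w \notin p -> Rn p w v.
Proof.
case: p => [//|r p'] _ _ ex.
have [v [vp Hv]] := exmax (Q := fun w v => size (nbr_steps e (r :: p') w) <= size (nbr_steps e (r :: p') v))
               (P := fun x => x \notin r :: p') (fun x y => leq_total _ _)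
               (fun x y z => @leq_trans _ _ _) ex.
exists v; split => // w wp; rewrite /Rn /= !mns_lab // => Hs.
have sub : {subset nbr_steps e (r :: p') v <= nbr_steps e (r :: p') w}.
  by move=> k kb; rewrite -mem_mapS; apply: Hs; rewrite mem_mapS.
have [_ E] := uniq_min_size (nb_uniq _ _) sub (Hv w wp).
move=> x /mapP [k kw ->]; rewrite mem_mapS E //.
Qed.

Lemma mns_gen s : is_mns e s <-> gen Rn s.
Proof.
split.
- move=> [O [x0 H]]; split => //.
  have hs : head x0 s = x0.
    case: s O H => [/ord_ne //|v q] _ H; move: (H [::] v q erefl x0 isT).
    rewrite /mns_label /nbr_steps /= eqxx; case: eqP => // _ H2.
    have Hs : {subset ([::] : seq nat) ++ [::] <= [:: #|T|.+1] ++ [::]} by [].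
    by move: (H2 Hs #|T|.+1); rewrite !inE eqxx => /(_ isT).
  move=> [|b p] v q Es _ w wp //; rewrite /Rn /=.
  by move: hs (H _ _ _ Es w wp); rewrite Es /= => ->.
- move=> [O L]; split => //.
  case: s O L => [/ord_ne //|x0 s'] _ L; exists x0.
  move=> [|b p] v q Es w wp.
    case: Es => <- _ _ y; case: (eqVneq w x0) => [->//|wx].
    by rewrite /mns_label /nbr_steps /= (negbTE wx).
  by case: Es (L _ _ _ Es isT w wp) => <- _; rewrite /Rn.
Qed.

Lemma bfs_equiv (R : seq T -> T -> T -> Prop) (P : seq T -> Prop)
  (Hmono : forall p w v, uniq p -> p != [::] -> w \notin p -> v \notin p ->
     (forall u, u \in p -> e u w -> e u v) -> R p w v)
  (Hstrict : forall p a b, uniq p -> p != [::] -> a \notin p -> b \notin p ->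
     (forall u, u \in p -> e u a -> e u b) -> (exists2 u, u \in p & e u b && ~~ e u a) ->
     ~ R p b a)
  (Hmax : forall p, uniq p -> p != [::] -> (exists x, x \notin p) ->
     exists v, v \notin p /\ forall w, w \notin p -> R p w v)
  (conv : forall s, P s <-> gen R s) t :
  (exists s, is_bfs e s /\ is_ftree_of e t s) <-> (exists s, P s /\ is_ftree_of e t s).
Proof.
split; apply: transfer.
- exact: bfs_props.
- by move=> s /conv; apply: gen_props.
- move=> r s1 O N; have [t1 [G Ek]] := gen_build Hmono Hmax O N.
  by exists t1; split => //; apply/conv.
- by move=> s /conv; apply: gen_props.
- exact: bfs_props.
- exact: bfs_build.
Qed.

End Main.

Theorem theorem4 (T : finType) (e t : rel T) :
  simple_graph e -> connected_graph e -> split_graph e -> spanning_tree e t ->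
  let bfs := exists s, is_bfs e s /\ is_ftree_of e t s in
  [/\ bfs <-> (exists s, is_mns e s /\ is_ftree_of e t s),
      bfs <-> (exists s, is_mcs e s /\ is_ftree_of e t s),
      bfs <-> (exists s, is_lbfs e s /\ is_ftree_of e t s) &
      bfs <-> (exists s, is_ldfs e s /\ is_ftree_of e t s)].
Proof.
move=> [esy eir] [Tne conn] [K [I [KI0 KIT Kcl Iind]]] _ bfs; rewrite /bfs.
have B := bfs_equiv esy eir KI0 KIT Kcl Iind conn Tne.
split.
- apply: (B (Rn e)); [exact: Rn_mono|exact: Rn_strict|exact: Rn_max|exact: mns_gen].
- apply: (B (Rc e)); [exact: Rc_mono|exact: Rc_strict|exact: Rc_max|exact: mcs_gen].
- apply: (B (Rl e)); [exact: Rl_mono|exact: Rl_strict|exact: Rl_max|exact: lbfs_gen].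
- apply: (B (Rd e)); [exact: Rd_mono|exact: Rd_strict|exact: Rd_max|exact: ldfs_gen].
Qed.
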